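(* Let $T>0$ and let $\lambda:[0,T]\times\mathbb{R}\to\mathbb{R}$ be a continuous function such that (i) $y\mapsto\sup_{t\in[0,T]}|\lambda(t,y)|$ belongs to $L^1(\mathbb{R})$, and (ii) the partial derivative $\lambda_t$ exists, is continuous, and $y\mapsto\sup_{t\in[0,T]}|\lambda_t(t,y)|$ belongs to $L^1(\mathbb{R})$. Then the function $$\phi(t,y)\triangleq\int_0^y\exp\Big(2\int_0^s\lambda(t,r)\,dr\Big)ds,\qquad(t,y)\in[0,T]\times\mathbb{R},$$ satisfies $\phi_{yy}(t,y)-2\lambda(t,y)\phi_y(t,y)=0$, and has the following properties: 1. For every $t\in[0,T]$, $\phi(t,\cdot)$ is a one-to-one function from $\mathbb{R}$ onto $\mathbb{R}$, both $\phi(t,\cdot)$ and its inverse $\phi^{-1}(t,\cdot)$ are smooth, and they are globally Lipschitz in $y$: there is a constant $L$ such that $|\phi(t,y)-\phi(t,\bar y)|\le L|y-\bar y|$ and $|\phi^{-1}(t,y)-\phi^{-1}(t,\bar y)|\le L|y-\bar y|$ for all $t\in[0,T]$, $y,\bar y\in\mathbb{R}$. 2. $\phi_y$ is a positive bounded function, and $\phi_t$ is continuous in $t$ and Lipschitz continuous in $y$.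
   Context: Subscripts denote partial derivatives: $\phi_t,\phi_y,\phi_{yy}$, $\lambda_t$. *)

(* Defs.v *)
From Stdlib Require Import Reals.
From mathcomp Require Import all_boot all_algebra.
From mathcomp Require Import all_classical all_reals all_analysis.
From mathcomp Require Import Rstruct Rstruct_topology.

Local Open Scope classical_set_scope.
Local Open Scope ring_scope.

Definition sup_abs_t (T : Rdefinitions.R) (f : Rdefinitions.R -> Rdefinitions.R -> Rdefinitions.R)
  (y : Rdefinitions.R) : Rdefinitions.R :=
  sup [set `|f t y| | t in `[0, T]%classic].

Definition L1 (g : Rdefinitions.R -> Rdefinitions.R) : Prop :=
  (@lebesgue_measure Rdefinitions.R).-integrable setT (fun y => (g y)%:E).

Local Close Scope ring_scope.
Local Open Scope R_scope.

Definition cont_on_strip (T : Rdefinitions.R) (f : Rdefinitions.R -> Rdefinitions.R -> Rdefinitions.R) : Prop :=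
  forall t y, 0 <= t <= T -> forall eps, 0 < eps ->
    exists delta, 0 < delta /\
      forall t' y', 0 <= t' <= T -> Rabs (t' - t) < delta -> Rabs (y' - y) < delta ->
        Rabs (f t' y' - f t y) < eps.

(* Main.v *)
Require Import Defs.
From Stdlib Require Import Reals.
From mathcomp Require all_boot all_order all_algebra all_classical all_reals all_analysis Rstruct Rstruct_topology.
From Stdlib Require Import Lra ClassicalEpsilon FunctionalExtensionality.

Module MC.
Import all_boot all_order all_algebra all_classical all_reals all_analysis Rstruct Rstruct_topology.
Import Order.TTheory GRing.Theory Num.Theory numFieldNormedType.Exports.
Local Open Scope classical_set_scope.
Local Open Scope ring_scope.

Lemma deriv_bridge (F : R -> R) x l : derivable_pt_lim F x l ->
  derivable (F : R^o -> R^o) x 1 /\ derive1 (F : R^o -> R^o) x = l.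
Proof.
move=> dF.
pose q h := if h == 0 then l else (F (h + x) - F x) / h.
have cq : continuity_pt q 0.
  move=> eps /dF [del Hd]; exists del; split; first exact: cond_pos del.
  move=> y [[_ Hy0] Hyd].
  rewrite /q eqxx; have /negbTE -> : y != 0 by apply/eqP => y0; apply: Hy0; rewrite y0.
  rewrite /R_dist /=.
  have := Hd y (fun h => Hy0 (esym h)).
  rewrite /dist /= /R_dist Rminus_0_r in Hyd.
  move=> /(_ Hyd); by rewrite Rplus_comm.
move/continuity_pt_cvg': cq; rewrite /q eqxx => cq.
split.
  apply/cvg_ex; exists l.
  apply: cvg_trans cq; apply: near_eq_cvg.
  near=> h.
  have hn0 : h != 0 by near: h; exact: nbhs_dnbhs_neq.
  rewrite /= (negbTE hn0).
  by rewrite /GRing.scale /= mulr1 mulrC.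
rewrite /derive1; apply: cvg_lim => //.
apply: cvg_trans cq; apply: near_eq_cvg.
near=> h.
have hn0 : h != 0 by near: h; exact: nbhs_dnbhs_neq.
rewrite /= (negbTE hn0).
by rewrite /GRing.scale /= mulrC.
Unshelve. all: by end_near.
Qed.


Lemma L1_bound (G : R -> R) : L1 G -> exists C : R,
  forall (g F : R -> R) (a b : R), Rlt a b ->
  (forall x, continuity_pt g x) -> (forall x, derivable_pt_lim F x (g x)) ->
  (forall r, Rle (Rabs (g r)) (G r)) -> Rle (Rabs (F b - F a)) C.
Proof.
move=> iG.
exists (fine (\int[@lebesgue_measure R]_(x in setT) (G x)%:E))%E.
move=> g F a b /RltP ab cg dF gG.
have G0 : forall r, 0 <= G r.
  move=> r; apply/RleP; apply: Rle_trans (gG r); exact: Rabs_pos.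
have ctsg : continuous (g : R^o -> R^o).
  by move=> x; apply/continuity_pt_cvg.
have ctsF : continuous (F : R^o -> R^o).
  move=> x; apply/continuity_pt_cvg.
  exact: (derivable_continuous_pt F x (exist _ (g x) (dF x))).
have dF' : derivable_oo_LRcontinuous (F : R^o -> R^o) a b.
  split.
  - by move=> x _; exact: (deriv_bridge _ _ _ (dF x)).1.
  - exact/cvg_at_right_filter/ctsF.
  - exact/cvg_at_left_filter/ctsF.
have Fg : {in `]a, b[, derive1 (F : R^o -> R^o) =1 g}.
  by move=> x _; exact: (deriv_bridge _ _ _ (dF x)).2.
have FTC := @continuous_FTC2 R g F a b ab (continuous_subspaceT ctsg) dF' Fg.
case/integrableP: (iG) => mG _.
have ig : (@lebesgue_measure R).-integrable `[a, b] (EFin \o g).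
  apply: continuous_compact_integrable; [exact: segment_compact|exact: continuous_subspaceT].
case/integrableP: (ig) => mg _.
have iGfin : (\int[@lebesgue_measure R]_(x in setT) (G x)%:E)%E \is a fin_num.
  rewrite ge0_fin_numE; first exact: integrable_lty iG.
  by apply: integral_ge0 => x _; rewrite lee_fin.
apply/RleP; rewrite -lee_fin fineK //.
have -> : Rabs (F b - F a) = `|F b - F a| by [].
rewrite -abse_EFin EFinB -FTC.
apply: (le_trans (le_abse_integral _ _ _)) => //.
apply: (@le_trans _ _ (\int[@lebesgue_measure R]_(x in `[a, b]) (G x)%:E)%E).
  apply: ge0_le_integral => //.
  - have -> : (fun x => `|(g x)%:E|%E) = EFin \o (fun x => Rabs (g x)).
      by apply: funext => x.
    have cag : continuous ((fun x => Rabs (g x)) : R^o -> R^o).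
      move=> x; apply/continuity_pt_cvg.
      exact: (continuity_pt_comp g Rabs x (cg x) (Rcontinuity_abs _)).
    have : (@lebesgue_measure R).-integrable `[a, b] (EFin \o (fun x => Rabs (g x))).
      apply: continuous_compact_integrable; [exact: segment_compact|exact: continuous_subspaceT].
    by case/integrableP.
  - by apply: measurable_funS mG.
  - move=> x _; rewrite abse_EFin lee_fin; apply/RleP; exact: gG.
apply: ge0_subset_integral => //.
by move=> x _; rewrite lee_fin.
Qed.


Lemma sup_ge (T : R) (f : R -> R -> R) y M :
  (forall t, Rle 0 t -> Rle t T -> Rle (Rabs (f t y)) M) ->
  forall t, Rle 0 t -> Rle t T -> Rle (Rabs (f t y)) (sup_abs_t T f y).
Proof.
move=> HM t t0 tT.
have hub : has_ubound [set `|f t y| | t in `[0, T]%classic].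
  exists M => x [s /= hs <-].
  move: hs; rewrite in_itv /= => /andP[/RleP s0 /RleP sT].
  apply/RleP; exact: HM.
apply/RleP; apply: (ub_le_sup hub).
exists t => //=; rewrite in_itv /=; apply/andP; split; exact/RleP.
Qed.

End MC.

From Coquelicot Require Import Coquelicot.
Open Scope R_scope.


Lemma cpt_cont (f : R -> R) x : continuity_pt f x -> continuous f x.
Proof. intro H; now apply continuity_pt_filterlim. Qed.

Lemma cont_cpt (f : R -> R) x : continuous f x -> continuity_pt f x.
Proof. intro H; now apply continuity_pt_filterlim. Qed.

Lemma exRI (f : R -> R) a b : (forall t, continuous f t) -> ex_RInt f a b.
Proof. intros cf; apply (@ex_RInt_continuous R_CompleteNormedModule); intros; apply cf. Qed.

Lemma loc_int (P : R -> Prop) x a b : a < x < b ->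
  (forall y, a < y < b -> P y) -> locally x P.
Proof.
intros [H1 H2] H. apply (locally_interval P x (Finite a) (Finite b)); simpl; auto.
Qed.

Lemma abs_RInt_le (f : R -> R) a b M :
  (forall t, continuous f t) ->
  (forall t, Rmin a b <= t <= Rmax a b -> Rabs (f t) <= M) ->
  Rabs (RInt f a b) <= Rabs (b - a) * M.
Proof.
intros cf Hb.
destruct (Rle_or_lt a b) as [ab|ab].
- rewrite (Rabs_right (b - a)) by lra.
  apply abs_RInt_le_const; auto.
  + apply exRI; auto.
  + intros t Ht; apply Hb; rewrite Rmin_left, Rmax_right by lra; lra.
- rewrite <- opp_RInt_swap by (apply exRI; auto).
  unfold opp; simpl. rewrite Rabs_Ropp, (Rabs_left (b - a)) by lra.
  replace (- (b - a)) with (a - b) by ring.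
  apply abs_RInt_le_const; try lra.
  + apply exRI; auto.
  + intros t Ht; apply Hb; rewrite Rmin_right, Rmax_left by lra; lra.
Qed.

Lemma RInt_ge (f : R -> R) a b m : a <= b ->
  (forall t, continuous f t) ->
  (forall t, a <= t <= b -> m <= f t) ->
  m * (b - a) <= RInt f a b.
Proof.
intros ab cf Hm.
replace (m * (b - a)) with (RInt (fun _ => m) a b).
- apply RInt_le; auto.
  + apply ex_RInt_const.
  + apply exRI; auto.
  + intros; apply Hm; lra.
- rewrite RInt_const; unfold scal; simpl; unfold mult; simpl; ring.
Qed.

Lemma RInt_diff (f : R -> R) a b c :
  (forall t, continuous f t) ->
  RInt f a b - RInt f a c = RInt f c b.
Proof.
intros cf.
rewrite <- (RInt_Chasles f a c b) by (apply exRI; auto).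
unfold plus; simpl; ring.
Qed.

Lemma derive_RInt (f : R -> R) a x :
  (forall t, continuous f t) -> is_derive (fun u => RInt f a u) x (f x).
Proof.
intros cf.
apply (is_derive_RInt f (fun u => RInt f a u) a x); auto.
apply filter_forall; intros y; exact (RInt_correct _ _ _ (exRI _ _ _ cf)).
Qed.

Lemma cont2_snd (F : R -> R -> R) s u :
  continuity_2d_pt F s u -> continuous (F s) u.
Proof.
intros H. apply cpt_cont, continuity_pt_locally. intros eps.
destruct (H eps) as [d Hd].
apply (loc_int _ u (u - d) (u + d)). { destruct d; simpl; lra. }
intros y Hy. apply Hd.
- rewrite Rminus_diag, Rabs_R0; apply cond_pos.
- apply Rabs_def1; lra.
Qed.

Lemma cont2_fst (F : R -> R -> R) s u :
  continuity_2d_pt F s u -> continuous (fun s => F s u) s.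
Proof.
intros H. apply cpt_cont, continuity_pt_locally. intros eps.
destruct (H eps) as [d Hd].
apply (loc_int _ s (s - d) (s + d)). { destruct d; simpl; lra. }
intros y Hy. apply Hd.
- apply Rabs_def1; lra.
- rewrite Rminus_diag, Rabs_R0; apply cond_pos.
Qed.

Lemma cont_minus (f g : R -> R) x : continuous f x -> continuous g x ->
  continuous (fun y => f y - g y) x.
Proof. intros; apply (continuous_minus (V:=R_NormedModule)); auto. Qed.

Lemma cont_mult (f g : R -> R) x : continuous f x -> continuous g x ->
  continuous (fun y => f y * g y) x.
Proof. intros; apply (continuous_mult (K:=R_AbsRing)); auto. Qed.

Lemma cont2_RInt (F : R -> R -> R) :
  (forall s u, continuity_2d_pt F s u) ->
  forall s v, continuity_2d_pt (fun s' v' => RInt (F s') 0 v') s v.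
Proof.
intros cF s v eps.
assert (cFs : forall s' r, continuous (F s') r) by (intros; apply cont2_snd; auto).
destruct (cF s v (mkposreal 1 Rlt_0_1)) as [d0 Hd0]; simpl in Hd0.
set (M := Rabs (F s v) + 1).
assert (HM : forall s' r, Rabs (s' - s) < d0 -> Rabs (r - v) < d0 -> Rabs (F s' r) <= M).
{ intros s' r H1 H2. specialize (Hd0 s' r H1 H2).
  unfold M. pose proof (Rabs_triang_inv (F s' r) (F s v)). lra. }
assert (M1 : 1 <= M) by (unfold M; pose proof (Rabs_pos (F s v)); lra).
assert (e1p : 0 < eps / (2 * (Rabs v + 1))).
{ apply Rdiv_lt_0_compat; [apply cond_pos| pose proof (Rabs_pos v); lra]. }
destruct (uniform_continuity_2d F (s-1) (s+1) (Rmin 0 v) (Rmax 0 v)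
  (fun x y _ _ => cF x y) (mkposreal _ e1p)) as [d1 Hd1]; simpl in Hd1.
assert (e2p : 0 < eps / (2 * (M + 1))).
{ apply Rdiv_lt_0_compat; [apply cond_pos| lra]. }
assert (dp : 0 < Rmin (Rmin d0 d1) (Rmin 1 (eps / (2 * (M + 1))))).
{ repeat apply Rmin_pos; try apply cond_pos; lra. }
exists (mkposreal _ dp); simpl; intros s' v' Hs Hv.
pose proof (Rmin_l (Rmin d0 d1) (Rmin 1 (eps / (2 * (M + 1))))) as m1.
pose proof (Rmin_r (Rmin d0 d1) (Rmin 1 (eps / (2 * (M + 1))))) as m2.
pose proof (Rmin_l d0 d1). pose proof (Rmin_r d0 d1).
pose proof (Rmin_l 1 (eps / (2 * (M + 1)))). pose proof (Rmin_r 1 (eps / (2 * (M + 1)))).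
set (d := Rmin (Rmin d0 d1) (Rmin 1 (eps / (2 * (M + 1))))) in *.
replace (RInt (F s') 0 v' - RInt (F s) 0 v) with
  (RInt (F s') v v' + RInt (fun r => F s' r - F s r) 0 v).
2:{ rewrite <- (RInt_diff (F s') 0 v' v) by auto.
    rewrite (RInt_minus (V:=R_CompleteNormedModule)) by (apply exRI; auto).
    unfold minus, plus, opp; simpl; ring. }
assert (B1 : Rabs (RInt (F s') v v') <= Rabs (v' - v) * M).
{ apply abs_RInt_le; auto. intros t Ht. apply HM; [lra|].
  assert (Rabs (t - v) <= Rabs (v' - v)).
  { destruct (Rle_or_lt v v').
    - rewrite Rmin_left, Rmax_right in Ht by lra.
      rewrite !Rabs_right by lra; lra.
    - rewrite Rmin_right, Rmax_left in Ht by lra.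
      rewrite !Rabs_left1 by lra; lra. }
  lra. }
assert (B2 : Rabs (RInt (fun r => F s' r - F s r) 0 v) <= Rabs (v - 0) * (eps / (2 * (Rabs v + 1)))).
{ apply abs_RInt_le.
  - intros; apply cont_minus; auto.
  - intros t Ht. left. apply (Hd1 s t s' t).
    + lra.
    + exact Ht.
    + apply Rabs_def2 in Hs; lra.
    + exact Ht.
    + lra.
    + rewrite Rminus_diag, Rabs_R0; apply cond_pos. }
rewrite Rminus_0_r in B2.
assert (B1' : Rabs (v' - v) * M < eps / 2).
{ apply Rle_lt_trans with (eps / (2 * (M + 1)) * M).
  - apply Rmult_le_compat_r; lra.
  - unfold Rdiv. rewrite Rinv_mult. 
    assert (0 < / (M + 1)) by (apply Rinv_0_lt_compat; lra).
    assert (/ (M + 1) * M < 1).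
    { apply Rmult_lt_reg_l with (M + 1); [lra|]. rewrite <- Rmult_assoc, Rinv_r by lra. lra. }
    pose proof (cond_pos eps). nra. }
assert (B2' : Rabs v * (eps / (2 * (Rabs v + 1))) < eps / 2).
{ unfold Rdiv. rewrite Rinv_mult.
  pose proof (Rabs_pos v).
  assert (/ (Rabs v + 1) * Rabs v < 1).
  { apply Rmult_lt_reg_l with (Rabs v + 1); [lra|]. rewrite <- Rmult_assoc, Rinv_r by lra. lra. }
  assert (0 < / (Rabs v + 1)) by (apply Rinv_0_lt_compat; lra).
  pose proof (cond_pos eps). nra. }
pose proof (Rabs_triang (RInt (F s') v v') (RInt (fun r => F s' r - F s r) 0 v)).
lra.
Qed.

Definition clamp (T t : R) := Rmax 0 (Rmin T t).

Lemma clamp_in T t : 0 <= T -> 0 <= clamp T t <= T.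
Proof.
intros HT; unfold clamp, Rmax, Rmin.
destruct (Rle_dec T t); destruct (Rle_dec 0 _); lra.
Qed.

Lemma clamp_id T t : 0 <= t <= T -> clamp T t = t.
Proof.
intros Ht; unfold clamp, Rmax, Rmin.
destruct (Rle_dec T t); destruct (Rle_dec 0 _); lra.
Qed.

Lemma clamp_lip T u v : 0 <= T -> Rabs (clamp T u - clamp T v) <= Rabs (u - v).
Proof.
intros HT; unfold clamp, Rmax, Rmin.
destruct (Rle_dec T u); destruct (Rle_dec T v);
repeat match goal with |- context [Rle_dec ?a ?b] => destruct (Rle_dec a b) end;
unfold Rabs; repeat match goal with |- context [Rcase_abs ?a] => destruct (Rcase_abs a) end; lra.
Qed.

Lemma cont2_clamp (T : R) (f : R -> R -> R) : 0 <= T -> cont_on_strip T f ->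
  forall s u, continuity_2d_pt (fun s' u' => f (clamp T s') u') s u.
Proof.
intros HT cf s u eps.
destruct (cf (clamp T s) u (clamp_in T s HT) eps (cond_pos eps)) as [d [dp Hd]].
exists (mkposreal d dp); simpl; intros s' u' H1 H2.
apply Hd; auto. apply clamp_in; auto.
pose proof (clamp_lip T s' s HT); lra.
Qed.

Lemma is_derive_eq (f : R -> R) x l l' : is_derive f x l -> l = l' -> is_derive f x l'.
Proof. intros H ->; exact H. Qed.

Lemma is_derive_cont (f : R -> R) x l : is_derive f x l -> continuous f x.
Proof. intros H; exact (ex_derive_continuous (K:=R_AbsRing) (V:=R_NormedModule) f x (ex_intro _ l H)). Qed.

Lemma exp_le a b : a <= b -> exp a <= exp b.
Proof. intros [H|H]; [left; apply exp_increasing; auto| right; subst; auto]. Qed.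

Definition Ef (l : R -> R) u := exp (2 * RInt l 0 u).
Definition Phi (l : R -> R) y := RInt (Ef l) 0 y.

Lemma cEf l u : (forall t, continuous l t) -> continuous (Ef l) u.
Proof.
intros cl; unfold Ef. apply continuous_exp_comp.
apply (is_derive_cont _ _ (2 * l u)).
apply (is_derive_eq _ _ (scal 2 (l u))); [|reflexivity].
apply is_derive_scal. apply derive_RInt; auto.
Qed.

Lemma dPhi l y : (forall t, continuous l t) -> is_derive (Phi l) y (Ef l y).
Proof. intros cl; apply derive_RInt; intros; apply cEf; auto. Qed.

Lemma dEf l y : (forall t, continuous l t) -> is_derive (Ef l) y (Ef l y * (2 * l y)).
Proof.
intros cl; unfold Ef.
apply (is_derive_eq _ _ (scal (2 * l y) (exp (2 * RInt l 0 y)))).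
- apply (is_derive_comp exp (fun u => 2 * RInt l 0 u)).
  + apply is_derive_exp.
  + apply (is_derive_eq _ _ (scal 2 (l y))); [|reflexivity].
    apply is_derive_scal. apply derive_RInt; auto.
- unfold scal; simpl; unfold mult; simpl; ring.
Qed.

Lemma Ef_pos l y : 0 < Ef l y.
Proof. apply exp_pos. Qed.

Lemma Ef_bnd l C y : (forall u, Rabs (RInt l 0 u) <= C) ->
  exp (- (2 * C)) <= Ef l y <= exp (2 * C).
Proof.
intros HC; unfold Ef. specialize (HC y). apply Rabs_le_between in HC.
split; apply exp_le; lra.
Qed.

Lemma Phi_diff l y yb : (forall t, continuous l t) ->
  Phi l y - Phi l yb = RInt (Ef l) yb y.
Proof. intros cl; apply RInt_diff; intros; apply cEf; auto. Qed.

Lemma Phi_up l C y yb : (forall t, continuous l t) -> (forall u, Rabs (RInt l 0 u) <= C) ->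
  Rabs (Phi l y - Phi l yb) <= exp (2 * C) * Rabs (y - yb).
Proof.
intros cl HC. rewrite Phi_diff by auto. rewrite Rmult_comm.
apply abs_RInt_le. { intros; apply cEf; auto. }
intros t _. rewrite Rabs_right. 2: { left; apply Ef_pos. }
apply (Ef_bnd l C t HC).
Qed.

Lemma Phi_low l C a b : (forall t, continuous l t) -> (forall u, Rabs (RInt l 0 u) <= C) ->
  a <= b -> exp (- (2 * C)) * (b - a) <= Phi l b - Phi l a.
Proof.
intros cl HC ab. rewrite Phi_diff by auto.
apply RInt_ge; auto. { intros; apply cEf; auto. }
intros t _; apply (Ef_bnd l C t HC).
Qed.

Lemma Phi_low_abs l C a b : (forall t, continuous l t) -> (forall u, Rabs (RInt l 0 u) <= C) ->
  exp (- (2 * C)) * Rabs (b - a) <= Rabs (Phi l b - Phi l a).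
Proof.
intros cl HC. pose proof (exp_pos (- (2 * C))).
destruct (Rle_or_lt a b).
- pose proof (Phi_low l C a b cl HC H0).
  rewrite (Rabs_right (b - a)) by lra. rewrite Rabs_right; nra.
- pose proof (Phi_low l C b a cl HC (Rlt_le _ _ H0)).
  rewrite (Rabs_left (b - a)) by lra. rewrite Rabs_left1; nra.
Qed.

Lemma Phi0 l : Phi l 0 = 0.
Proof. unfold Phi; rewrite RInt_point; reflexivity. Qed.

Lemma Phi_surj l C : (forall t, continuous l t) -> (forall u, Rabs (RInt l 0 u) <= C) ->
  forall z, exists y, Phi l y = z.
Proof.
intros cl HC z.
set (m := exp (- (2 * C))). assert (mp : 0 < m) by apply exp_pos.
set (K := Rabs z / m).
assert (K0 : 0 <= K) by (unfold K; apply Rdiv_le_0_compat; [apply Rabs_pos|lra]).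
assert (mK : m * K = Rabs z) by (unfold K; field; lra).
pose proof (Phi_low l C 0 K cl HC K0) as H1.
pose proof (Phi_low l C (- K) 0 cl HC ltac:(lra)) as H2.
rewrite Phi0 in H1, H2. fold m in H1, H2.
assert (cP : continuity (Phi l)).
{ intros x; apply cont_cpt, (is_derive_cont _ _ (Ef l x)), dPhi; auto. }
destruct (IVT_gen (Phi l) (- K) K z cP) as [y [_ Hy]].
- pose proof (Rabs_le_between' z 0 (Rabs z)) as Hb.
  pose proof (Rle_abs z). pose proof (Rle_abs (- z)). rewrite Rabs_Ropp in H0.
  split.
  + apply Rle_trans with (Phi l (- K)); [apply Rmin_l|]. nra.
  + apply Rle_trans with (Phi l K); [nra|apply Rmax_r].
- exists y; exact Hy.
Qed.

Definition Psi (l : R -> R) z := epsilon (inhabits 0) (fun y => Phi l y = z).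

Lemma Phi_Psi l C z : (forall t, continuous l t) -> (forall u, Rabs (RInt l 0 u) <= C) ->
  Phi l (Psi l z) = z.
Proof.
intros cl HC. unfold Psi. apply epsilon_spec.
apply (Phi_surj l C cl HC z).
Qed.

Lemma Phi_inj l C a b : (forall t, continuous l t) -> (forall u, Rabs (RInt l 0 u) <= C) ->
  Phi l a = Phi l b -> a = b.
Proof.
intros cl HC E. pose proof (Phi_low_abs l C a b cl HC). rewrite E, Rminus_diag, Rabs_R0 in H.
pose proof (exp_pos (- (2 * C))). pose proof (Rabs_pos (b - a)).
assert (Rabs (b - a) = 0) by nra.
apply Rabs_eq_0 in H2. lra.
Qed.

Lemma Psi_Phi l C y : (forall t, continuous l t) -> (forall u, Rabs (RInt l 0 u) <= C) ->
  Psi l (Phi l y) = y.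
Proof.
intros cl HC. apply (Phi_inj l C); auto. apply Phi_Psi with C; auto.
Qed.

Lemma Psi_lip l C z w : (forall t, continuous l t) -> (forall u, Rabs (RInt l 0 u) <= C) ->
  Rabs (Psi l z - Psi l w) <= exp (2 * C) * Rabs (z - w).
Proof.
intros cl HC.
pose proof (Phi_low_abs l C (Psi l w) (Psi l z) cl HC).
rewrite !(Phi_Psi l C) in H by auto.
assert (exp (2 * C) * exp (- (2 * C)) = 1) by (rewrite <- exp_plus; replace (2 * C + - (2 * C)) with 0 by ring; apply exp_0).
pose proof (exp_pos (2 * C)).
apply Rmult_le_compat_l with (r := exp (2 * C)) in H; [|lra].
rewrite <- Rmult_assoc, H0, Rmult_1_l in H. exact H.
Qed.

Lemma Psi_cont l C z : (forall t, continuous l t) -> (forall u, Rabs (RInt l 0 u) <= C) ->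
  continuity_pt (Psi l) z.
Proof.
intros cl HC. apply continuity_pt_locally. intros eps.
pose proof (exp_pos (2 * C)) as Hp.
assert (dp : 0 < eps / exp (2 * C)) by (apply Rdiv_lt_0_compat; [apply cond_pos|lra]).
apply (loc_int _ z (z - eps / exp (2 * C)) (z + eps / exp (2 * C))). { lra. }
intros y Hy. eapply Rle_lt_trans. { apply (Psi_lip l C); auto. }
assert (Rabs (y - z) < eps / exp (2 * C)) by (apply Rabs_def1; lra).
apply Rmult_lt_compat_l with (r := exp (2 * C)) in H; [|lra].
replace (exp (2 * C) * (eps / exp (2 * C))) with (pos eps) in H by (field; lra).
exact H.
Qed.

Lemma Psi_incr l C a b : (forall t, continuous l t) -> (forall u, Rabs (RInt l 0 u) <= C) ->
  a <= b -> Psi l a <= Psi l b.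
Proof.
intros cl HC ab. destruct (Rle_or_lt (Psi l a) (Psi l b)); auto.
pose proof (Phi_low l C (Psi l b) (Psi l a) cl HC (Rlt_le _ _ H)).
rewrite !(Phi_Psi l C) in H0 by auto.
pose proof (exp_pos (- (2 * C))).
assert (0 < exp (- (2 * C)) * (Psi l a - Psi l b)) by (apply Rmult_lt_0_compat; lra).
lra.
Qed.

Definition D1 (l : R -> R) z := exp (- (2 * RInt l 0 (Psi l z))).

Lemma dPsi l C z : (forall t, continuous l t) -> (forall u, Rabs (RInt l 0 u) <= C) ->
  is_derive (Psi l) z (D1 l z).
Proof.
intros cl HC. apply is_derive_Reals.
set (Prf := fun a (_ : Psi l (z - 1) <= a <= Psi l (z + 1)) =>
  exist (fun l0 => derivable_pt_lim (Phi l) a l0) (Ef l a)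
    (proj1 (is_derive_Reals _ _ _) (dPhi l a cl))).
assert (Hincr : Psi l (z - 1) <= Psi l z <= Psi l (z + 1)).
{ split; apply (Psi_incr l C); auto; lra. }
pose proof (Ranalysis5.derivable_pt_lim_recip_interv (Phi l) (Psi l) (z - 1) (z + 1) z Prf
  (Psi_cont l C z cl HC) ltac:(lra) ltac:(lra) Hincr) as H.
simpl in H.
assert (Hd : D1 l z = 1 / Ef l (Psi l z)).
{ unfold D1, Ef. rewrite exp_Ropp. unfold Rdiv; ring. }
rewrite Hd. apply H.
- intros x0 _. unfold comp, id. apply (Phi_Psi l C); auto.
- apply Rgt_not_eq, Ef_pos.
Qed.

Lemma cD1 l C z : (forall t, continuous l t) -> (forall u, Rabs (RInt l 0 u) <= C) ->
  continuous (D1 l) z.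
Proof.
intros cl HC. unfold D1. apply continuous_exp_comp.
apply (continuous_opp (V:=R_NormedModule) (fun z => 2 * RInt l 0 (Psi l z))).
apply (is_derive_cont _ _ (scal (D1 l z) (scal 2 (l (Psi l z))))).
apply (is_derive_comp (fun u => 2 * RInt l 0 u) (Psi l)).
- apply is_derive_scal, derive_RInt; auto.
- apply (dPsi l C); auto.
Qed.

Lemma dD1 l C z : (forall t, continuous l t) -> (forall u, Rabs (RInt l 0 u) <= C) ->
  is_derive (D1 l) z (D1 l z * (- (2 * (l (Psi l z) * D1 l z)))).
Proof.
intros cl HC. unfold D1 at 1.
apply (is_derive_eq _ _ (scal (- (scal (D1 l z) (scal 2 (l (Psi l z))))) (exp (- (2 * RInt l 0 (Psi l z)))))).
- apply (is_derive_comp exp (fun z => - (2 * RInt l 0 (Psi l z)))).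
  + apply is_derive_exp.
  + apply (is_derive_opp (fun z => 2 * RInt l 0 (Psi l z))).
    apply (is_derive_comp (fun u => 2 * RInt l 0 u) (Psi l)).
    * apply is_derive_scal, derive_RInt; auto.
    * apply (dPsi l C); auto.
- unfold scal, D1; simpl; unfold mult; simpl; ring.
Qed.

Lemma int_bound (T : R) (f : R -> R -> R) : 0 < T -> cont_on_strip T f ->
  L1 (sup_abs_t T f) ->
  exists C, forall s u, Rabs (RInt (fun r => f (clamp T s) r) 0 u) <= C.
Proof.
intros HT cf iG.
destruct (MC.L1_bound _ iG) as [C HC].
assert (c2 := cont2_clamp T f (Rlt_le _ _ HT) cf).
assert (gG : forall s r, Rabs (f (clamp T s) r) <= sup_abs_t T f r).
{ intros s r.
  destruct (continuity_ab_maj (fun t => Rabs (f (clamp T t) r)) 0 T (Rlt_le _ _ HT)) as [Mx [HMx _]].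
  { intros c _. apply continuity_pt_comp with (f2 := Rabs).
    - apply cont_cpt. apply (cont2_fst (fun s' u' => f (clamp T s') u') c r). apply c2.
    - apply Rcontinuity_abs. }
  pose proof (clamp_in T s (Rlt_le _ _ HT)) as Hin.
  apply (MC.sup_ge T f r (Rabs (f (clamp T Mx) r))); try apply Hin.
  intros t t0 tT. rewrite <- (clamp_id T t) at 1 by lra. apply HMx; lra. }
assert (Hb : forall s a b, a < b -> Rabs (RInt (fun r => f (clamp T s) r) 0 b - RInt (fun r => f (clamp T s) r) 0 a) <= C).
{ intros s a b ab. apply (HC (fun r => f (clamp T s) r) (fun u => RInt (fun r => f (clamp T s) r) 0 u) a b ab).
  - intros x; apply cont_cpt, (cont2_snd (fun s' u' => f (clamp T s') u')), (c2 s x).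
  - intros x; apply is_derive_Reals, derive_RInt. intros t; apply (cont2_snd (fun s' u' => f (clamp T s') u')), (c2 s t).
  - intros r; apply gG. }
assert (C0 : 0 <= C) by (eapply Rle_trans; [apply Rabs_pos| apply (Hb 0 0 1); lra]).
exists C. intros s u.
assert (E0 : RInt (fun r => f (clamp T s) r) 0 0 = 0) by exact (RInt_point 0 (fun r => f (clamp T s) r)).
destruct (Rtotal_order u 0) as [H|[H|H]].
- specialize (Hb s u 0 H). rewrite E0, Rminus_0_l, Rabs_Ropp in Hb. exact Hb.
- subst. rewrite E0, Rabs_R0; exact C0.
- specialize (Hb s 0 u H). rewrite E0, Rminus_0_r in Hb. exact Hb.
Qed.

Lemma param_deriv (T : R) (F DF : R -> R -> R) :
  (forall s r, 0 < s < T -> is_derive (fun z => F z r) s (DF s r)) ->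
  (forall s r, continuity_2d_pt F s r) -> (forall s r, continuity_2d_pt DF s r) ->
  forall s u, 0 < s < T -> is_derive (fun z => RInt (F z) 0 u) s (RInt (DF s) 0 u).
Proof.
intros dF cF cDF s u Hs.
apply (is_derive_eq _ _ (RInt (fun t => Derive (fun z => F z t) s) 0 u)).
- apply (is_derive_RInt_param F 0 u s).
  + apply (loc_int _ s 0 T Hs). intros y Hy t _. exists (DF y t). apply dF; auto.
  + intros t _. apply (continuity_2d_pt_ext_loc DF).
    * assert (dp : 0 < Rmin s (T - s)) by (apply Rmin_pos; lra).
      exists (mkposreal _ dp); simpl. intros a b Ha _.
      pose proof (Rmin_l s (T - s)). pose proof (Rmin_r s (T - s)).
      apply Rabs_def2 in Ha.
      symmetry; apply is_derive_unique, dF; lra.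
    * apply cDF.
  + apply filter_forall; intros y. apply exRI. intros t; apply cont2_snd, cF.
- apply RInt_ext. intros x _. apply is_derive_unique, dF; auto.
Qed.

Lemma Ef_ext l1 l2 u : (forall r, l1 r = l2 r) -> Ef l1 u = Ef l2 u.
Proof. intros H; unfold Ef; f_equal; f_equal; apply RInt_ext; intros; apply H. Qed.

Theorem lemma5p1 (T : R) (lam lam_t : R -> R -> R) :
  0 < T ->
  (* lambda continuous on [0,T] x R *)
  cont_on_strip T lam ->
  (* (i) *)
  L1 (sup_abs_t T lam) ->
  (* (ii) lambda_t exists (one-sided at t = 0, T; see NOTES), is continuous *)
  (forall t y, 0 < t < T -> is_derive (fun s => lam s y) t (lam_t t y)) ->
  cont_on_strip T lam_t ->
  L1 (sup_abs_t T lam_t) ->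
  let phi := fun t y =>
    RInt (fun s => exp (2 * RInt (fun r => lam t r) 0 s)) 0 y in
  (* phi_yy - 2 lambda phi_y = 0 *)
  (forall t y, 0 <= t <= T ->
     ex_derive (phi t) y /\
     is_derive (fun z => Derive (phi t) z) y (2 * lam t y * Derive (phi t) y)) /\
  (* 1. bijection, C^2 with C^2 inverse, uniformly Lipschitz *)
  (exists phi_inv : R -> R -> R,
     (forall t, 0 <= t <= T ->
        (forall y, phi_inv t (phi t y) = y) /\
        (forall y, phi t (phi_inv t y) = y) /\
        (forall y, ex_derive (phi t) y /\ ex_derive (Derive (phi t)) y) /\
        (forall y, continuous (Derive (Derive (phi t))) y) /\
        (forall y, ex_derive (phi_inv t) y /\ ex_derive (Derive (phi_inv t)) y) /\
        (forall y, continuous (Derive (Derive (phi_inv t))) y)) /\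
     exists L, forall t y yb, 0 <= t <= T ->
        Rabs (phi t y - phi t yb) <= L * Rabs (y - yb) /\
        Rabs (phi_inv t y - phi_inv t yb) <= L * Rabs (y - yb)) /\
  (* 2. phi_y positive and bounded *)
  (forall t y, 0 <= t <= T -> 0 < Derive (phi t) y) /\
  (exists M, forall t y, 0 <= t <= T -> Derive (phi t) y <= M) /\
  (* phi_t exists, continuous in t, Lipschitz in y *)
  (exists phi_t : R -> R -> R,
     (forall t y, 0 < t < T -> is_derive (fun s => phi s y) t (phi_t t y)) /\
     (forall y t, 0 <= t <= T -> forall eps, 0 < eps -> exists delta, 0 < delta /\
        forall t', 0 <= t' <= T -> Rabs (t' - t) < delta ->
          Rabs (phi_t t' y - phi_t t y) < eps) /\
     exists K, forall t y yb, 0 <= t <= T ->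
        Rabs (phi_t t y - phi_t t yb) <= K * Rabs (y - yb)).
Proof.
intros HT clam iL dlam clt iLt phi.
set (lc := fun s r => lam (clamp T s) r).
set (ltc := fun s r => lam_t (clamp T s) r).
destruct (int_bound T lam HT clam iL) as [C HC].
destruct (int_bound T lam_t HT clt iLt) as [C' HC'].
assert (c2l : forall s u, continuity_2d_pt lc s u) by (apply cont2_clamp; auto; lra).
assert (c2lt : forall s u, continuity_2d_pt ltc s u) by (apply cont2_clamp; auto; lra).
assert (lcE : forall t, 0 <= t <= T -> lc t = lam t).
{ intros t Ht; apply functional_extensionality; intros r; unfold lc; rewrite clamp_id; auto. }
assert (cl : forall t, 0 <= t <= T -> forall x, continuous (lam t) x).
{ intros t Ht x; rewrite <- (lcE t Ht); apply (cont2_snd lc), c2l. }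
assert (HCt : forall t, 0 <= t <= T -> forall u, Rabs (RInt (lam t) 0 u) <= C).
{ intros t Ht u; rewrite <- (lcE t Ht); apply HC. }
assert (phiE : forall t, phi t = Phi (lam t)) by reflexivity.
assert (DphiE : forall t, 0 <= t <= T -> Derive (phi t) = Ef (lam t)).
{ intros t Ht; apply functional_extensionality; intros y; rewrite phiE.
  apply is_derive_unique, dPhi, cl; auto. }
assert (DDphiE : forall t, 0 <= t <= T -> Derive (Derive (phi t)) = fun y => Ef (lam t) y * (2 * lam t y)).
{ intros t Ht; apply functional_extensionality; intros y; rewrite DphiE by auto.
  apply is_derive_unique, dEf, cl; auto. }
assert (DpsiE : forall t, 0 <= t <= T -> Derive (Psi (lam t)) = D1 (lam t)).
{ intros t Ht; apply functional_extensionality; intros y.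
  apply is_derive_unique, (dPsi _ C); auto. }
assert (DDpsiE : forall t, 0 <= t <= T -> Derive (Derive (Psi (lam t))) =
   fun z => D1 (lam t) z * (- (2 * (lam t (Psi (lam t) z) * D1 (lam t) z)))).
{ intros t Ht; apply functional_extensionality; intros y; rewrite DpsiE by auto.
  apply is_derive_unique, (dD1 _ C); auto. }
split; [|split; [|split; [|split]]].
- intros t y Ht. split.
  + exists (Ef (lam t) y); rewrite phiE; apply dPhi, cl; auto.
  + rewrite (DphiE t Ht). try rewrite (DphiE t Ht). apply (is_derive_eq _ _ (Ef (lam t) y * (2 * lam t y))).
    * apply dEf, cl; auto.
    * apply Rmult_comm.
- exists (fun t => Psi (lam t)). split.
  + intros t Ht. split; [|split; [|split; [|split; [|split]]]].
    * intros y; rewrite phiE; apply (Psi_Phi _ C); auto.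
    * intros y; rewrite phiE; apply (Phi_Psi _ C); auto.
    * intros y; split.
      -- exists (Ef (lam t) y); rewrite phiE; apply dPhi, cl; auto.
      -- rewrite DphiE by auto. exists (Ef (lam t) y * (2 * lam t y)); apply dEf, cl; auto.
    * intros y; rewrite DDphiE by auto.
      apply cont_mult; [apply cEf, cl; auto|].
      apply cont_mult; [apply continuous_const|apply cl; auto].
    * intros y; split.
      -- exists (D1 (lam t) y); apply (dPsi _ C); auto.
      -- rewrite DpsiE by auto. eexists; apply (dD1 _ C); auto.
    * intros y; rewrite DDpsiE by auto.
      apply cont_mult; [apply (cD1 _ C); auto|].
      apply (continuous_opp (V:=R_NormedModule) (fun z => 2 * (lam t (Psi (lam t) z) * D1 (lam t) z))).
      apply cont_mult; [apply continuous_const|].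
      apply cont_mult; [|apply (cD1 _ C); auto].
      apply (continuous_comp (Psi (lam t)) (lam t)).
      ++ apply cpt_cont, (Psi_cont _ C); auto.
      ++ apply cl; auto.
  + exists (exp (2 * C)). intros t y yb Ht. split.
    * rewrite phiE; apply (Phi_up _ C); auto.
    * apply (Psi_lip _ C); auto.
- intros t y Ht; rewrite DphiE by auto; apply Ef_pos.
- exists (exp (2 * C)); intros t y Ht; rewrite DphiE by auto; apply (Ef_bnd _ C), HCt; auto.
- assert (cLam : forall s u, continuity_2d_pt (fun s u => RInt (lc s) 0 u) s u)
    by (apply cont2_RInt; auto).
  assert (cTh : forall s u, continuity_2d_pt (fun s u => RInt (ltc s) 0 u) s u)
    by (apply cont2_RInt; auto).
  assert (cE2 : forall s u, continuity_2d_pt (fun s u => Ef (lc s) u) s u).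
  { intros s u. unfold Ef.
    apply (continuity_1d_2d_pt_comp exp (fun s u => 2 * RInt (lc s) 0 u)).
    - apply cont_cpt, continuous_exp.
    - apply continuity_2d_pt_mult; [apply continuity_2d_pt_const|apply cLam]. }
  set (H := fun s u => Ef (lc s) u * (2 * RInt (ltc s) 0 u)).
  assert (cH : forall s u, continuity_2d_pt H s u).
  { intros s u; apply continuity_2d_pt_mult; [apply cE2|].
    apply continuity_2d_pt_mult; [apply continuity_2d_pt_const|apply cTh]. }
  assert (dLs : forall s r, 0 < s < T -> is_derive (fun z => lc z r) s (ltc s r)).
  { intros s r Hs. unfold ltc; rewrite clamp_id by lra.
    apply (is_derive_ext_loc (fun z => lam z r)); [|apply dlam; auto].
    apply (loc_int _ s 0 T Hs). intros z Hz; unfold lc; rewrite clamp_id; auto; lra. }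
  assert (dLam : forall s u, 0 < s < T -> is_derive (fun z => RInt (lc z) 0 u) s (RInt (ltc s) 0 u)).
  { apply param_deriv; auto. }
  assert (dE : forall s u, 0 < s < T -> is_derive (fun z => Ef (lc z) u) s (H s u)).
  { intros s u Hs. unfold H, Ef.
    apply (is_derive_eq _ _ (scal (scal 2 (RInt (ltc s) 0 u)) (exp (2 * RInt (lc s) 0 u)))).
    - apply (is_derive_comp exp (fun z => 2 * RInt (lc z) 0 u)).
      + apply is_derive_exp.
      + apply is_derive_scal, dLam; auto.
    - unfold scal; simpl; unfold mult; simpl; ring. }
  assert (dP : forall s y, 0 < s < T -> is_derive (fun z => RInt (fun u => Ef (lc z) u) 0 y) s (RInt (H s) 0 y)).
  { apply (param_deriv T (fun z u => Ef (lc z) u) H); auto. }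
  exists (fun s y => RInt (H s) 0 y). split; [|split].
  + intros t y Ht. apply (is_derive_ext_loc (fun z => RInt (fun u => Ef (lc z) u) 0 y)); [|apply dP; auto].
    apply (loc_int _ t 0 T Ht). intros z Hz. rewrite phiE. unfold Phi.
    rewrite (lcE z) by lra. reflexivity.
  + intros y t Ht eps epsp.
    destruct (cont2_RInt H cH t y (mkposreal eps epsp)) as [d Hd].
    exists d; split; [apply cond_pos|]. intros t' _ Ht'.
    apply (Hd t' y Ht'). rewrite Rminus_diag, Rabs_R0; apply cond_pos.
  + exists (exp (2 * C) * (2 * C')). intros t y yb _.
    rewrite RInt_diff by (intros; apply cont2_snd, cH).
    rewrite Rmult_comm. apply abs_RInt_le. { intros; apply cont2_snd, cH. }
    intros u _. unfold H. rewrite Rabs_mult, Rabs_mult, (Rabs_right 2) by lra.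
    rewrite Rabs_right by (left; apply Ef_pos).
    pose proof (Ef_bnd (lc t) C u (HC t)) as [_ B1].
    pose proof (HC' t u) as B2. pose proof (Ef_pos (lc t) u).
    pose proof (Rabs_pos (RInt (ltc t) 0 u)).
    apply Rmult_le_compat; try lra.
    apply Rmult_le_compat_l; [lra|apply B2].
Qed.
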